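(* Let $\alpha\in\mathbb R$, $\gamma,\delta\ge0$, $h>0$, $\tau>0$, and consider the Compact6 method with forward Euler time stepping applied to the linear equation $u_t+\alpha u_x=\gamma u_{xx}+\delta u_{xxt}$, whose amplification factor for the Fourier mode with phase $\theta$ is \[ \mathcal{L}(\theta)=\frac{\Big(1+\dfrac{\gamma\tau-\delta}{2h^2}P\Big)-\dfrac{i\alpha\tau}{6h}Q}{1-\dfrac{\delta}{2h^2}P},\qquad P=\frac{48\cos\theta+3\cos 2\theta-51}{11+4\cos\theta},\quad Q=\frac{28\sin\theta+\sin 2\theta}{3+2\cos\theta}. \] The method is stable, in the sense that $|\mathcal{L}(\theta)|^2\le 1+2C\tau$, if there exists a constant $C>0$ such that \[ \tau\le\frac{2\Big(1-\dfrac{\delta P}{2h^2}\Big)\Big(C-\dfrac{C\delta P}{2h^2}-\dfrac{\gamma P}{2h^2}\Big)}{\dfrac{\gamma^2P^2}{4h^4}+\dfrac{\alpha^2Q^2}{36h^2}}. \]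
   Context: The Compact6 method approximates $u_x$ and $u_{xx}$ at grid points $x_j$ (spacing $h$) by the sixth-order compact schemes $\tfrac13u'_{j-1}+u'_j+\tfrac13u'_{j+1}=\tfrac1h(-\tfrac1{36}u_{j-2}-\tfrac79u_{j-1}+\tfrac79u_{j+1}+\tfrac1{36}u_{j+2})$ and $\tfrac2{11}u''_{j-1}+u''_j+\tfrac2{11}u''_{j+1}=\tfrac1{h^2}(\tfrac3{44}u_{j-2}+\tfrac{12}{11}u_{j-1}-\tfrac{51}{22}u_j+\tfrac{12}{11}u_{j+1}+\tfrac3{44}u_{j+2})$, and time is discretized by forward Euler with step $\tau$, giving $u^{n+1}_j=\mathcal L(\theta)u^n_j$ for a Fourier mode $u_j=\hat u e^{ij\theta}$, $\theta=\omega h$. Stability (relaxed von Neumann) means $|\mathcal L(\theta)|\le 1+C\tau$, taken here in the form $|\mathcal L(\theta)|^2\le 1+2C\tau$. *)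

(* Defs.v *)
From Stdlib Require Import Reals.
From Coquelicot Require Import Coquelicot.
Open Scope R_scope.

Definition P6 (theta : R) : R :=
  (48 * cos theta + 3 * cos (2 * theta) - 51) / (11 + 4 * cos theta).
Definition Q6 (theta : R) : R :=
  (28 * sin theta + sin (2 * theta)) / (3 + 2 * cos theta).

Definition amp (alpha gamma delta h tau theta : R) : C :=
  Cdiv
    (Cminus (RtoC (1 + (gamma * tau - delta) / (2 * h ^ 2) * P6 theta))
            (Cmult Ci (RtoC (alpha * tau / (6 * h) * Q6 theta))))
    (RtoC (1 - delta / (2 * h ^ 2) * P6 theta)).

Definition bound_num (gamma delta h Cst theta : R) : R :=
  2 * (1 - delta * P6 theta / (2 * h ^ 2))
    * (Cst - Cst * delta * P6 theta / (2 * h ^ 2) - gamma * P6 theta / (2 * h ^ 2)).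
Definition bound_den (alpha gamma h theta : R) : R :=
  gamma ^ 2 * P6 theta ^ 2 / (4 * h ^ 4) + alpha ^ 2 * Q6 theta ^ 2 / (36 * h ^ 2).

(* Main.v *)
Require Import Defs.
From Stdlib Require Import Reals Lra Psatz.
From Coquelicot Require Import Coquelicot.
Open Scope R_scope.

Lemma P6_nonpos t : P6 t <= 0.
Proof.
  unfold P6. rewrite cos_2a_cos. pose proof (COS_bound t) as [h1 h2].
  unfold Rdiv.
  assert (0 < / (11 + 4 * cos t)) by (apply Rinv_0_lt_compat; lra).
  assert (6 * cos t * cos t + 48 * cos t - 54 <= 0) by nra.
  replace (48 * cos t + 3 * (2 * cos t * cos t - 1) - 51) with (6 * cos t * cos t + 48 * cos t - 54) by ring.
  nra.
Qed.

Theorem theorem3 (alpha gamma delta h tau Cst : R)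
  (hgamma : 0 <= gamma) (hdelta : 0 <= delta) (hh : 0 < h) (htau : 0 < tau)
  (hC : 0 < Cst)
  (hstep : forall theta : R,
      bound_den alpha gamma h theta <> 0 ->
      tau <= bound_num gamma delta h Cst theta / bound_den alpha gamma h theta) :
  forall theta : R, Cmod (amp alpha gamma delta h tau theta) ^ 2 <= 1 + 2 * Cst * tau.
Proof.
  intro t. specialize (hstep t). pose proof (P6_nonpos t) as HP.
  unfold bound_num, bound_den in hstep.
  set (P := P6 t) in *. set (Q := Q6 t) in *.
  set (p := P / (2 * h ^ 2)).
  assert (Hh2 : 0 < 2 * h ^ 2) by nra.
  assert (Hp : p <= 0).
  { unfold p, Rdiv. assert (0 < / (2 * h ^ 2)) by (apply Rinv_0_lt_compat; lra). nra. }
  set (D := 1 - delta * p).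
  assert (HD : 1 <= D) by (unfold D; nra).
  set (B := alpha * tau / (6 * h) * Q).
  set (E := gamma ^ 2 * P ^ 2 / (4 * h ^ 4) + alpha ^ 2 * Q ^ 2 / (36 * h ^ 2)).
  assert (HE : E = gamma ^ 2 * p ^ 2 + (alpha * Q / (6 * h)) ^ 2)
    by (unfold E, p; field; lra).
  assert (Hamp : amp alpha gamma delta h tau t = ((D + gamma * tau * p) / D, - B / D)).
  { unfold amp, Cdiv, Cminus, Cmult, Cinv, Copp, Cplus, RtoC, Ci; simpl.
    fold P Q. unfold D, B, p.
    apply injective_projections; simpl; field; (split; [lra|]); nra. }
  rewrite Hamp. unfold Cmod; simpl. rewrite !Rmult_1_r, sqrt_sqrt by (apply Rplus_le_le_0_compat; apply Rle_0_sqr).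
  assert (Key : 2 * D * gamma * tau * p + tau ^ 2 * E <= 2 * Cst * tau * D ^ 2).
  { destruct (Req_dec E 0) as [H0|H0].
    - rewrite H0.
      assert (0 <= D * gamma * tau) by (apply Rmult_le_pos; [apply Rmult_le_pos|]; lra).
      assert (0 < Cst * tau * D ^ 2) by (apply Rmult_lt_0_compat; [nra|]; nra).
      nra.
    - assert (HEp : 0 < E) by (rewrite HE in *; nra).
      specialize (hstep H0).
      assert (Hn : tau * E <= 2 * (1 - delta * P / (2 * h ^ 2)) *
        (Cst - Cst * delta * P / (2 * h ^ 2) - gamma * P / (2 * h ^ 2))).
      { fold E in hstep. apply Rmult_le_reg_r with (/ E).
        apply Rinv_0_lt_compat; lra.
        rewrite Rmult_assoc, Rinv_r by lra. lra. }
      assert (Hn' : tau * E <= 2 * D * (Cst * D - gamma * p)).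
      { replace (2 * D * (Cst * D - gamma * p)) with
          (2 * (1 - delta * P / (2 * h ^ 2)) *
           (Cst - Cst * delta * P / (2 * h ^ 2) - gamma * P / (2 * h ^ 2))).
        exact Hn. unfold D, p. field. lra. }
      nra. }
  assert (HB : B ^ 2 = tau ^ 2 * (alpha * Q / (6 * h)) ^ 2) by (unfold B; field; lra).
  match goal with |- ?l <= _ =>
    replace l with (((D + gamma * tau * p) ^ 2 + B ^ 2) / D ^ 2) by (field; lra) end.
  apply Rmult_le_reg_r with (D ^ 2). nra.
  unfold Rdiv. rewrite Rmult_assoc, Rinv_l by nra.
  rewrite HB. rewrite HE in Key. nra.
Qed.
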